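(* Let $K$ be an uncountable algebraically closed field of characteristic zero, $m,n\ge1$, and $P_1,\ldots,P_s\in K[[t_1,\ldots,t_m]]\{x_1,\ldots,x_n\}$. Let $S=(S_1,\ldots,S_n)$ with $S_i\subseteq\mathbb{Z}_{\ge0}^m$. If there is no $\varphi\in K[[t_1,\ldots,t_m]]^n$ with $P_1(\varphi)=\cdots=P_s(\varphi)=0$ and $\operatorname{Supp}(\varphi)=S$, then there exists $k\ge0$ such that $A_{k,S}=\emptyset$.
   Context: Notation: $t^J=t_1^{j_1}\cdots t_m^{j_m}$, $\|J\|_\infty=\max_ij_i$, $\Theta(J)=\partial_{t_1}^{j_1}\cdots\partial_{t_m}^{j_m}$. $K[[t_1,\ldots,t_m]]\{x_1,\ldots,x_n\}$ is the polynomial ring over $K[[t_1,\ldots,t_m]]$ in indeterminates $x_{i,J}$ ($1\le i\le n$, $J\in\mathbb{Z}_{\ge0}^m$), with derivations $\partial_{t_k}$ extended by $\partial_{t_k}x_{i,J}=x_{i,J+e_k}$; $P(\varphi)$ is obtained by substituting $\Theta(J)\varphi_i$ for $x_{i,J}$. $\operatorname{Supp}(\sum a_Jt^J)=\{J:a_J\ne0\}$, componentwise on tuples. For $1\le\ell\le s$, $I\in\mathbb{Z}_{\ge0}^m$, $F_{\ell,I}=(\Theta(I)P_\ell)|_{t_1=\cdots=t_m=0}\in K[x_{i,J}]$. For each $k\ge0$, $N_k\ge0$ is minimal such that every $F_{\ell,I}$ with $1\le\ell\le s$, $\|I\|_\infty\le k$ lies in $K[x_{i,J}:1\le i\le n,\|J\|_\infty\le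 N_k]$. $A_k$ is the set of tuples $(a_{i,J})_{1\le i\le n,\|J\|_\infty\le N_k}\in K^{n\times\{0,\ldots,N_k\}^m}$ with $F_{\ell,I}((a_{i,J}))=0$ for all $1\le\ell\le s$, $\|I\|_\infty\le k$; and $A_{k,S}=\{(a_{i,J})\in A_k: a_{i,J}=0 \iff J\notin S_i\}$. *)

(* Defs.v *)
From HB Require Import structures.
From mathcomp Require Import all_boot all_order all_algebra.
Set Implicit Arguments. Unset Strict Implicit. Unset Printing Implicit Defensive.
Import GRing.Theory.
Local Open Scope ring_scope.

Section DiffPoly.
Variable K : fieldType.
Variables m n : nat.

Definition mi := {ffun 'I_m -> nat}.
Definition mnorm (J : mi) : nat := (\max_(k < m) J k)%N.
Definition mi0 : mi := [ffun => 0%N].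
Definition miadd (J L : mi) : mi := [ffun k => (J k + L k)%N].
Definition misub (J L : mi) : mi := [ffun k => (J k - L k)%N].
Definition unit_mi (k : 'I_m) : mi := [ffun k' => nat_of_bool (k' == k)].
Definition mile (L J : mi) : bool := [forall k, (L k <= J k)%N].

(* formal power series in K[[t_1,...,t_m]], given by coefficient functions *)
Definition pser := mi -> K.
Definition pzero : pser := fun _ => 0.
Definition pone : pser := fun J => if J == mi0 then 1 else 0.
Definition padd (f g : pser) : pser := fun J => f J + g J.
Definition pmul (f g : pser) : pser := fun J =>
  \sum_(L : {ffun 'I_m -> 'I_(mnorm J).+1} | mile [ffun k => val (L k)] J)
     f [ffun k => val (L k)] * g (misub J [ffun k => val (L k)]).
Definition pderiv (k : 'I_m) (f : pser) : pser :=
  fun J => (J k).+1%:R * f (miadd J (unit_mi k)).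
Definition Theta (J : mi) (f : pser) : pser :=
  foldr (fun k g => iter (J k) (pderiv k) g) f (enum 'I_m).
Definition Supp (f : pser) : mi -> Prop := fun J => f J != 0.

(* differential indeterminates x_{i,J} *)
Definition var := ('I_n * mi)%type.
(* a differential polynomial: a finite formal sum of terms c * prod x_{i,J},
   c in K[[t]], the monomial given as a multiset (list) of indeterminates *)
Definition dpoly := seq (pser * seq var).

Definition evalmon (phi : 'I_n -> pser) (mon : seq var) : pser :=
  foldr (fun v acc => pmul (Theta v.2 (phi v.1)) acc) pone mon.
Definition dpeval (P : dpoly) (phi : 'I_n -> pser) : pser :=
  foldr (fun t acc => padd (pmul t.1 (evalmon phi t.2)) acc) pzero P.

(* extension of d/dt_k to the differential polynomial ring:
   d/dt_k x_{i,J} = x_{i,J+e_k}, Leibniz rule *)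
Definition shiftv (k : 'I_m) (v : var) : var := (v.1, miadd v.2 (unit_mi k)).
Fixpoint mon_derivs (k : 'I_m) (mon : seq var) : seq (seq var) :=
  match mon with
  | [::] => [::]
  | v :: mon' => (shiftv k v :: mon') :: [seq v :: mu | mu <- mon_derivs k mon']
  end.
Definition dpderiv (k : 'I_m) (P : dpoly) : dpoly :=
  flatten [seq (pderiv k t.1, t.2) :: [seq (t.1, mu) | mu <- mon_derivs k t.2] | t <- P].
Definition dpTheta (J : mi) (P : dpoly) : dpoly :=
  foldr (fun k Q => iter (J k) (dpderiv k) Q) P (enum 'I_m).

(* polynomials in K[x_{i,J}] as finite formal sums *)
Definition kpoly := seq (K * seq var).
(* substitution t_1 = ... = t_m = 0 *)
Definition at_zero (P : dpoly) : kpoly := [seq (t.1 mi0, t.2) | t <- P].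
Definition kcoef (F : kpoly) (mu : seq var) : K :=
  \sum_(t <- F | perm_eq t.2 mu) t.1.
Definition in_subring (N : nat) (F : kpoly) : Prop :=
  forall mu : seq var, kcoef F mu != 0 -> all (fun v => (mnorm v.2 <= N)%N) mu.
Definition keval (F : kpoly) (a : 'I_n -> mi -> K) : K :=
  \sum_(t <- F) t.1 * \prod_(v <- t.2) a v.1 v.2.

Variable s : nat.
Variable Ps : 'I_s -> dpoly.

Definition Fpoly (l : 'I_s) (I : mi) : kpoly := at_zero (dpTheta I (Ps l)).

Definition bounds_ok (k N : nat) : Prop :=
  forall (l : 'I_s) (I : mi), (mnorm I <= k)%N -> in_subring N (Fpoly l I).
Definition isNk (k N : nat) : Prop :=
  bounds_ok k N /\ forall N', bounds_ok k N' -> (N <= N')%N.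

Definition tupl (N : nat) := 'I_n -> {ffun 'I_m -> 'I_N.+1} -> K.
Definition lowJ (N : nat) (J : {ffun 'I_m -> 'I_N.+1}) : mi := [ffun k => val (J k)].
Definition ext_tupl (N : nat) (a : tupl N) : 'I_n -> mi -> K :=
  fun i J => if (mnorm J <= N)%N then a i [ffun k => inord (J k)] else 0.

Definition in_A (k N : nat) (a : tupl N) : Prop :=
  forall (l : 'I_s) (I : mi), (mnorm I <= k)%N -> keval (Fpoly l I) (ext_tupl a) = 0.
Definition in_AS (k N : nat) (S : 'I_n -> mi -> Prop) (a : tupl N) : Prop :=
  in_A k a /\ forall i J, a i J = 0 <-> ~ S i (lowJ J).

End DiffPoly.

(* Main.v *)
Require Import Defs.
From HB Require Import structures.
From mathcomp Require Import all_boot all_order all_algebra all_field.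
From Stdlib Require Import Classical ClassicalEpsilon FunctionalExtensionality.
Set Implicit Arguments. Unset Strict Implicit. Unset Printing Implicit Defensive.
Import GRing.Theory.
Local Open Scope ring_scope.

Section PS.
Variables (K : fieldType) (m : nat).
Local Notation mi := (mi m).
Local Notation pser := (pser K m).

Definition tomi B (L : {ffun 'I_m -> 'I_B.+1}) : mi := [ffun k => val (L k)].
Definition bsum B (J : mi) (F : mi -> K) :=
  \sum_(L : {ffun 'I_m -> 'I_B.+1} | mile (tomi L) J) F (tomi L).

Lemma pmulE (f g : pser) J : pmul f g J = bsum (mnorm J) J (fun L => f L * g (misub J L)).
Proof. by []. Qed.

Lemma le_mnorm (J : mi) k : (J k <= mnorm J)%N.
Proof. by rewrite /mnorm; apply: (@leq_bigmax _ (fun k => J k)). Qed.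

Lemma mileP (L J : mi) : reflect (forall k, L k <= J k)%N (mile L J).
Proof. exact: forallP. Qed.

Lemma inordV n x : (x < n.+1)%N -> \val (@inord n x) = x.
Proof. exact: inordK. Qed.

Lemma bsum_indep B J F : (mnorm J <= B)%N -> bsum B J F = bsum (mnorm J) J F.
Proof.
move=> hB; rewrite /bsum.
pose h (L : {ffun 'I_m -> 'I_(mnorm J).+1}) : {ffun 'I_m -> 'I_B.+1} :=
  [ffun k => inord (val (L k))].
pose h' (L : {ffun 'I_m -> 'I_B.+1}) : {ffun 'I_m -> 'I_(mnorm J).+1} :=
  [ffun k => inord (val (L k))].
have htomi L : tomi (h L) = tomi L.
  apply/ffunP=> k; rewrite /tomi /h !ffunE inordV //.
  by apply: leq_trans (ltn_ord (L k)) _.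
rewrite (reindex_onto h h') /=.
  apply: eq_big => [L|L _]; rewrite htomi //; case: (mile _ _) => //=.
  apply/eqP/ffunP => k; rewrite /h /h' !ffunE; apply: val_inj => /=.
  by rewrite inordV ?inordV //; apply: leq_trans (ltn_ord (L k)) _.
move=> L /mileP hL; apply/ffunP => k; rewrite /h /h' !ffunE; apply: val_inj => /=.
have hk : (L k <= mnorm J)%N.
  by apply: leq_trans (le_mnorm J k); move: (hL k); rewrite ffunE.
by rewrite inordV ?inordV //; apply: leq_trans hB.
Qed.


Lemma inord_big n x : (n.+1 <= x)%N -> \val (@inord n x) = 0%N.
Proof. by move=> h; rewrite /inord val_insubd ltnNge h. Qed.

Lemma mnorm_le (J : mi) B : (forall k, J k <= B)%N -> (mnorm J <= B)%N.
Proof. by move=> h; rewrite /mnorm; apply/bigmax_leqP => k _; apply: h. Qed.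

Lemma mnorm_addu (J : mi) k : (mnorm (miadd J (unit_mi k)) <= (mnorm J).+1)%N.
Proof.
apply: mnorm_le => j; rewrite !ffunE.
by apply: leq_trans (leq_add (le_mnorm J j) (leq_b1 _)) _; rewrite addn1.
Qed.

Lemma pderiv_pmul k (f g : pser) :
  pderiv k (pmul f g) = padd (pmul (pderiv k f) g) (pmul f (pderiv k g)).
Proof.
apply: functional_extensionality => J.
set e := unit_mi k; set B := (mnorm J).+1.
have ek : e k = 1%N by rewrite /e ffunE eqxx.
have ej j : j != k -> e j = 0%N by move=> hj; rewrite /e ffunE (negbTE hj).
rewrite /pderiv /padd !pmulE.
rewrite -(bsum_indep _ (mnorm_addu J k)) -/e.
rewrite -(@bsum_indep B J) ?leqnSn // -(@bsum_indep B J) ?leqnSn //.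
rewrite -/B; clearbody e.
set h := fun L => f L * g (misub (miadd J e) L).
have S0 : (J k).+1%:R * bsum B (miadd J e) h =
   bsum B (miadd J e) (fun L => (L k)%:R * h L) +
   bsum B (miadd J e) (fun L => ((J k).+1 - L k)%:R * h L).
  rewrite /bsum mulr_sumr -big_split /=; apply: eq_bigr => L /mileP hL /=.
  rewrite -mulrDl -natrD subnKC //.
  by move: (hL k); rewrite [miadd _ _ _]ffunE ek addn1.
have S2 : bsum B (miadd J e) (fun L => ((J k).+1 - L k)%:R * h L) =
   bsum B J (fun L : mi => f L * ((misub J L k).+1%:R * g (miadd (misub J L) e))).
  rewrite /bsum big_mkcond [RHS]big_mkcond /=; apply: eq_bigr => L _.
  set L' := tomi L.
  case mLJ: (mile L' J).
    have hLJ := mileP _ _ mLJ.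
    have hv j : (\val (L j) <= J j)%N by have := hLJ j; rewrite ffunE.
    have -> : mile L' (miadd J e).
      by apply/mileP => j; rewrite [miadd _ _ _]ffunE; apply: leq_trans (hLJ j) (leq_addr _ _).
    rewrite /h.
    have -> : misub (miadd J e) L' = miadd (misub J L') e.
      by apply/ffunP => j; rewrite !ffunE addnBAC ?hv.
    rewrite mulrCA; congr (_ * (_ * _)); rewrite !ffunE subSn ?hv //.
  case mLJe: (mile L' (miadd J e)) => //.
  have [j hj] := forallPn (negbT mLJ).
  have hj' := mileP _ _ mLJe j; rewrite [miadd _ _ _]ffunE in hj'.
  rewrite -ltnNge in hj.
  have jk : j = k.
    by apply/eqP/negPn/negP => /ej hej; move: hj'; rewrite hej addn0 leqNgt hj.
  subst j; rewrite ek addn1 in hj'.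
  have -> : L' k = (J k).+1 by apply/eqP; rewrite eqn_leq hj' hj.
  by rewrite subnn mul0r.
have S1 : bsum B (miadd J e) (fun L => (L k)%:R * h L) =
   bsum B J (fun L : mi => (L k).+1%:R * f (miadd L e) * g (misub J L)).
  rewrite /bsum.
  transitivity (\sum_(L : {ffun 'I_m -> 'I_B.+1} | mile (tomi L) (miadd J e) && (0 < tomi L k)%N)
                   (tomi L k)%:R * h (tomi L)).
    rewrite big_mkcondr; apply: eq_bigr => L _; case: ifP => // /negbT.
    by rewrite -eqn0Ngt => /eqP ->; rewrite mul0r.
  pose sh (L : {ffun 'I_m -> 'I_B.+1}) : {ffun 'I_m -> 'I_B.+1} :=
    [ffun j => inord (tomi L j + e j)].
  pose ush (L : {ffun 'I_m -> 'I_B.+1}) : {ffun 'I_m -> 'I_B.+1} :=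
    [ffun j => inord (tomi L j - e j)].
  have tsh L : (tomi L k < B)%N -> tomi (sh L) = miadd (tomi L) e.
    move=> hL; apply/ffunP => j; rewrite /sh !ffunE inordV //.
    rewrite ffunE in hL.
    case: (eqVneq j k) => [->|/ej->]; first by rewrite ek addn1 ltnS.
    by rewrite addn0; apply: leq_trans (ltn_ord (L j)) _.
  have JB j : (J j < B)%N by rewrite ltnS le_mnorm.
  have cond L : (mile (tomi (sh L)) (miadd J e) && (0 < tomi (sh L) k)%N)
       && (ush (sh L) == L) = mile (tomi L) J.
    case hB: (tomi L k < B)%N.
      rewrite tsh //.
      have -> : mile (miadd (tomi L) e) (miadd J e) = mile (tomi L) J.
        by apply: eq_forallb => j; rewrite !ffunE leq_add2r.
      rewrite [miadd _ _ k]ffunE ek addn1 /= andbT.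
      case: (mile _ _) => //=; apply/eqP/ffunP => j; apply: val_inj.
      rewrite /ush !ffunE.
      have := tsh L hB => /ffunP /(_ j); rewrite !ffunE => ->.
      by rewrite addnK inordV //; apply: ltn_ord.
    have -> : tomi (sh L) k = 0%N.
      rewrite /sh !ffunE inord_big //; move: hB; rewrite ffunE => /negbT.
      by rewrite -leqNgt ek addn1 ltnS.
    rewrite andbF /=; apply/esym/negbTE/negP => /mileP /(_ k).
    move/negbT: hB; rewrite -leqNgt => hB hL.
    by have := leq_trans hB hL; rewrite leqNgt JB.
  rewrite (reindex_onto sh ush).
    apply: eq_big => L; first exact: cond.
    rewrite cond => hL.
    have hLk : (tomi L k < B)%N.
      by apply: leq_ltn_trans (JB k); move/mileP: hL; apply.
    rewrite tsh // /h.
    have -> : misub (miadd J e) (miadd (tomi L) e) = misub J (tomi L).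
      by apply/ffunP => j; rewrite !ffunE subnDr.
    by rewrite [miadd _ _ k]ffunE ek addn1 mulrA.
  move=> L /andP [_ hk]; apply/ffunP => j; apply: val_inj; rewrite /sh /ush !ffunE /=.
  have hLj : (\val (L j) - e j < B.+1)%N.
    by rewrite ltnS; apply: leq_trans (leq_subr _ _) _; rewrite -ltnS ltn_ord.
  rewrite (inordV hLj) subnK ?inordV //.
    exact: ltn_ord.
  case: (eqVneq j k) => [->|/ej->] //; rewrite ek; by move: hk; rewrite ffunE.
by rewrite S0 S1 S2.
Qed.


Lemma padd0p (f : pser) : padd (@pzero K m) f = f.
Proof. by apply: functional_extensionality => J; rewrite /padd /pzero add0r. Qed.

Lemma paddA (f g h : pser) : padd f (padd g h) = padd (padd f g) h.
Proof. by apply: functional_extensionality => J; rewrite /padd addrA. Qed.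

Lemma pderiv_padd k (f g : pser) : pderiv k (padd f g) = padd (pderiv k f) (pderiv k g).
Proof. by apply: functional_extensionality => J; rewrite /padd /pderiv mulrDr. Qed.

Lemma pderiv_pzero k : pderiv k (@pzero K m) = @pzero K m.
Proof. by apply: functional_extensionality => J; rewrite /pzero /pderiv mulr0. Qed.

Lemma pmulDr (f g h : pser) : pmul f (padd g h) = padd (pmul f g) (pmul f h).
Proof.
apply: functional_extensionality => J; rewrite /padd !pmulE /bsum -big_split /=.
by apply: eq_bigr => L _; rewrite mulrDr.
Qed.

Lemma pmulp0 (f : pser) : pmul f (@pzero K m) = @pzero K m.
Proof.
apply: functional_extensionality => J; rewrite pmulE /bsum /pzero big1 // => L _.
by rewrite mulr0.
Qed.

Lemma pderiv_pone k : pderiv k (@pone K m) = @pzero K m.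
Proof.
apply: functional_extensionality => J; rewrite /pderiv /pone /pzero.
case: eqP => [/ffunP /(_ k)|]; last by rewrite mulr0.
by rewrite !ffunE eqxx addn1.
Qed.

Definition ffc (j c : nat) : K := \prod_(r < c) ((j + r).+1)%:R.

Lemma ffcS j c : ffc j c.+1 = (j.+1)%:R * ffc j.+1 c.
Proof.
rewrite /ffc big_ord_recl /= addn0; congr (_ * _).
by apply: eq_bigr => i _; rewrite /= addSnnS.
Qed.

Definition cunit (k : 'I_m) (c : nat) : mi := [ffun j => if j == k then c else 0%N].

Lemma iter_pderiv k c (g : pser) J :
  iter c (pderiv k) g J = ffc (J k) c * g (miadd J (cunit k c)).
Proof.
elim: c J => [|c IH] J /=.
  rewrite /ffc big_ord0 mul1r; congr g; apply/ffunP => j; rewrite !ffunE.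
  by case: ifP; rewrite addn0.
rewrite /pderiv IH ffcS mulrA; congr (_ * _ * g _).
  by rewrite !ffunE eqxx addn1.
apply/ffunP => j; rewrite !ffunE; case: eqP => [->|_]; last by rewrite !addn0.
by rewrite -addnA add1n.
Qed.

Definition restrict (I : mi) (r : seq 'I_m) : mi :=
  [ffun j => if j \in r then I j else 0%N].

Lemma foldr_Theta (I : mi) (f : pser) (r : seq 'I_m) J : uniq r ->
  foldr (fun k g => iter (I k) (pderiv k) g) f r J =
  (\prod_(k <- r) ffc (J k) (I k)) * f (miadd J (restrict I r)).
Proof.
elim: r J => [|k r IH] J /=.
  move=> _; rewrite big_nil mul1r; congr f; apply/ffunP => j.
  by rewrite !ffunE in_nil addn0.
move=> /andP [kr ur]; rewrite iter_pderiv IH // big_cons -mulrA; congr (_ * (_ * f _)).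
  apply: eq_big_seq => j jr; rewrite !ffunE.
  case: ifP => [/eqP ejk|_]; last by rewrite addn0.
  by move: kr; rewrite -ejk jr.
apply/ffunP => j; rewrite !ffunE in_cons.
case: ifP => [/eqP ->|_] /=; last by rewrite addn0.
by rewrite (negbTE kr) addn0.
Qed.

Lemma Theta_formula (I : mi) (f : pser) J :
  Theta I f J = (\prod_(k <- enum 'I_m) ffc (J k) (I k)) * f (miadd J I).
Proof.
rewrite /Theta foldr_Theta ?enum_uniq //; congr (_ * f _).
by apply/ffunP => j; rewrite !ffunE mem_enum.
Qed.

Lemma Theta_pderiv k (I : mi) (f : pser) :
  pderiv k (Theta I f) = Theta (miadd I (unit_mi k)) f.
Proof.
apply: functional_extensionality => J; rewrite /pderiv !Theta_formula.
have -> : miadd (miadd J (unit_mi k)) I = miadd J (miadd I (unit_mi k)).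
  by apply/ffunP => j; rewrite !ffunE addnAC addnA.
rewrite mulrA; congr (_ * _).
rewrite !(bigD1_seq k) ?mem_enum ?enum_uniq //= mulrA; congr (_ * _).
  by rewrite !ffunE eqxx !addn1 ffcS.
apply: eq_bigr => j hj; rewrite !ffunE.
by move: hj; case: eqP => // _ _; rewrite !addn0.
Qed.

Definition sumev n (phi : 'I_n -> pser) (L : seq (seq (var m n))) : pser :=
  foldr (fun mu acc => padd (evalmon phi mu) acc) (@pzero K m) L.

Lemma sumev_cons n (phi : 'I_n -> pser) v D :
  sumev phi [seq v :: mu | mu <- D] = pmul (Theta v.2 (phi v.1)) (sumev phi D).
Proof.
elim: D => [|mu D IH] /=; first by rewrite pmulp0.
by rewrite IH pmulDr.
Qed.

Lemma evalmon_deriv n (phi : 'I_n -> pser) k mon :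
  pderiv k (evalmon phi mon) = sumev phi (mon_derivs k mon).
Proof.
elim: mon => [|v mon IH] /=; first by rewrite /evalmon pderiv_pone.
by rewrite pderiv_pmul Theta_pderiv sumev_cons -IH.
Qed.

Lemma dpeval_cat n (phi : 'I_n -> pser) (A B : dpoly K m n) :
  dpeval (A ++ B) phi = padd (dpeval A phi) (dpeval B phi).
Proof.
elim: A => [|t A IH] /=; first by rewrite padd0p.
by rewrite /dpeval /= -/(dpeval A phi) -/(dpeval (A ++ B) phi) IH paddA.
Qed.

Lemma dpeval_map n (phi : 'I_n -> pser) c D :
  dpeval [seq (c, mu) | mu <- D] phi = pmul c (sumev phi D).
Proof.
elim: D => [|mu D IH] /=; first by rewrite pmulp0.
by rewrite /dpeval /= -/(dpeval _ phi) IH pmulDr.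
Qed.

Lemma dpeval_deriv n (phi : 'I_n -> pser) k (P : dpoly K m n) :
  pderiv k (dpeval P phi) = dpeval (dpderiv k P) phi.
Proof.
elim: P => [|t P IH]; first by rewrite /dpeval /= pderiv_pzero.
rewrite /dpderiv /= -/(dpderiv k P) dpeval_cat -IH.
rewrite /dpeval /= -/(dpeval P phi) -/(dpeval _ phi).
by rewrite dpeval_map pderiv_padd pderiv_pmul evalmon_deriv paddA.
Qed.

Lemma dpTheta_eval n (phi : 'I_n -> pser) (I : mi) (P : dpoly K m n) :
  Theta I (dpeval P phi) = dpeval (dpTheta I P) phi.
Proof.
rewrite /Theta /dpTheta; elim: (enum 'I_m) => [|k r IH] //=.
rewrite IH; elim: (I k) => [|c IHc] //=.
by rewrite IHc dpeval_deriv.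
Qed.


Lemma mnorm0 : mnorm (mi0 m) = 0%N.
Proof. by apply/eqP; rewrite -leqn0; apply: mnorm_le => k; rewrite ffunE. Qed.

Lemma pmul_at0 (f g : pser) : pmul f g (mi0 m) = f (mi0 m) * g (mi0 m).
Proof.
rewrite pmulE -(@bsum_indep 0) ?mnorm0 // /bsum.
pose L0 : {ffun 'I_m -> 'I_1} := [ffun => ord0].
have tL0 : tomi L0 = mi0 m by apply/ffunP => j; rewrite !ffunE.
rewrite (big_pred1 L0) ?tL0.
  by congr (_ * g _); apply/ffunP => j; rewrite !ffunE.
move=> L /=; have -> : L = L0 by apply/ffunP => j; rewrite ffunE; apply: ord1.
by rewrite eqxx tL0; apply/forallP => j; rewrite ffunE.
Qed.

Lemma evalmon_at0 n (phi : 'I_n -> pser) mon :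
  evalmon phi mon (mi0 m) = \prod_(v <- mon) Theta v.2 (phi v.1) (mi0 m).
Proof.
elim: mon => [|v mon IH] /=; first by rewrite big_nil /evalmon /= /pone eqxx.
by rewrite big_cons -IH /evalmon /= pmul_at0.
Qed.

Lemma dpeval_at0 n (phi : 'I_n -> pser) (Q : dpoly K m n) :
  dpeval Q phi (mi0 m) = keval (at_zero Q) (fun i J => Theta J (phi i) (mi0 m)).
Proof.
rewrite /keval /at_zero big_map; elim: Q => [|t Q IH] /=.
  by rewrite big_nil.
by rewrite big_cons -IH /dpeval /= /padd pmul_at0 evalmon_at0.
Qed.

Definition fct (I : mi) : K := \prod_(k <- enum 'I_m) ffc 0 (I k).

Lemma Theta_at0 (I : mi) (f : pser) : Theta I f (mi0 m) = fct I * f I.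
Proof.
rewrite Theta_formula /fct; congr (_ * f _).
  by apply: eq_bigr => k _; rewrite ffunE.
by apply/ffunP => j; rewrite !ffunE.
Qed.

Lemma fct_neq0 (I : mi) : [pchar K] =i pred0 -> fct I != 0.
Proof.
move=> ch; rewrite /fct prodf_seq_neq0; apply/allP => k _ /=.
rewrite /ffc; apply/prodf_neq0 => r _.
by move/pcharf0P: ch => ->.
Qed.

End PS.

Section Good.
Variable K : closedFieldType.

Definition Good (X : K -> Prop) :=
  (exists q : {poly K}, q != 0 /\ forall x, X x -> root q x) \/
  (exists q : {poly K}, q != 0 /\ forall x, ~~ root q x -> X x).

Lemma Good_ext (X Y : K -> Prop) : (forall x, X x <-> Y x) -> Good X -> Good Y.
Proof.
move=> h [[q [q0 hq]]|[q [q0 hq]]]; [left|right]; exists q; split=> // x.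
  by move/h; apply: hq.
by move/hq/h.
Qed.

Lemma Good_not (X : K -> Prop) : Good X -> Good (fun x => ~ X x).
Proof.
move=> [[q [q0 hq]]|[q [q0 hq]]]; [right|left]; exists q; split=> // x.
  by move=> hr hX; move: (hq x hX); rewrite (negbTE hr).
by move=> nX; apply/negPn/negP => /hq.
Qed.

Lemma Good_and (X Y : K -> Prop) : Good X -> Good Y -> Good (fun x => X x /\ Y x).
Proof.
move=> [[q [q0 hq]]|[q [q0 hq]]].
  by move=> _; left; exists q; split=> // x [/hq].
move=> [[p [p0 hp]]|[p [p0 hp]]].
  by left; exists p; split=> // x [_ /hp].
right; exists (q * p); split; first by rewrite mulf_neq0.
by move=> x; rewrite rootM negb_or => /andP [/hq ? /hp ?].
Qed.

Lemma Good_or (X Y : K -> Prop) : Good X -> Good Y -> Good (fun x => X x \/ Y x).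
Proof.
move=> gX gY.
have := Good_not (Good_and (Good_not gX) (Good_not gY)).
apply: Good_ext => x; split.
  by move=> h; apply: NNPP => h'; apply: h; split => ?; apply: h'; [left|right].
by move=> [h|h] [].
Qed.

Lemma Good_root (p : {poly K}) : Good (fun x => root p x).
Proof.
case: (eqVneq p 0) => [->|p0].
  by right; exists 1; split; [exact: oner_neq0 | move=> x _; exact: root0].
by left; exists p.
Qed.

Lemma Good_bool (b : bool) : Good (fun _ => b).
Proof.
case: b; first by right; exists 1; split => //; exact: oner_neq0.
by left; exists 1; split => //; exact: oner_neq0.
Qed.

Lemma Good_qf (f : GRing.formula K) (e : seq K) (j : nat) :
  GRing.qf_form f && GRing.rformula f ->
  Good (fun x => GRing.qf_eval (set_nth 0 e j x) f).
Proof.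
move=> hf.
have hr : all GRing.dnf_rterm (GRing.qf_to_dnf f false).
  by apply: GRing.qf_to_dnf_rterm; case/andP: hf.
apply: (Good_ext (X := fun x => GRing.qf_eval (set_nth 0 e j x)
          (GRing.dnf_to_form (GRing.qf_to_dnf f false)))).
  by move=> x; rewrite (GRing.qf_to_dnfP _ hf).
elim: (GRing.qf_to_dnf f false) hr => [|bc bcs IH] /=.
  by move=> _; apply: Good_bool.
case/andP=> /andP [h1 h2] /IH hbcs.
apply: (Good_ext (X := fun x => (GRing.qf_eval (set_nth 0 e j x)
     (foldr (fun t => GRing.And (t == 0)%T) GRing.True bc.1) /\
     GRing.qf_eval (set_nth 0 e j x)
     (foldr (fun t => GRing.And (t != 0)%T) GRing.True bc.2)) \/
     GRing.qf_eval (set_nth 0 e j x) (GRing.dnf_to_form bcs))).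
  by move=> x /=; split; [case=> [[-> ->]|->] //; rewrite orbT |
     case/orP => [/andP [-> ->]|->]; [left|right]].
apply: Good_or => //; apply: Good_and.
  elim: bc.1 h1 => [|t l IHl] /=; first by move=> _; apply: Good_bool.
  case/andP=> ht /IHl hl.
  apply: (Good_ext (X := fun x => root (ClosedFieldQE.eval_poly e (ClosedFieldQE.abstrX j t)) x /\
       GRing.qf_eval (set_nth 0 e j x) (foldr (fun t => GRing.And (t == 0)%T) GRing.True l))).
    by move=> x; rewrite rootE ClosedFieldQE.abstrXP //; split; [case=> -> -> | case/andP=> -> ->].
  by apply: Good_and => //; apply: Good_root.
elim: bc.2 h2 => [|t l IHl] /=; first by move=> _; apply: Good_bool.
case/andP=> ht /IHl hl.
apply: (Good_ext (X := fun x => ~ root (ClosedFieldQE.eval_poly e (ClosedFieldQE.abstrX j t)) x /\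
     GRing.qf_eval (set_nth 0 e j x) (foldr (fun t => GRing.And (t != 0)%T) GRing.True l))).
  move=> x; rewrite rootE ClosedFieldQE.abstrXP //; split.
    by case=> /negP -> ->.
  by case/andP=> /negP ? ->.
by apply: Good_and => //; apply: Good_not; apply: Good_root.
Qed.

Lemma Good_holds (f : GRing.formula K) (e : seq K) (j : nat) :
  Good (fun x => GRing.holds (set_nth 0 e j x) f).
Proof.
pose proj := @ClosedFieldQE.ex_elim K.
have wf := @ClosedFieldQE.wf_ex_elim K.
have ok := @ClosedFieldQE.holds_ex_elim K (@GRing.solve_monicpoly K).
pose g := GRing.quantifier_elim proj (GRing.to_rform f).
have hg : GRing.qf_form g && GRing.rformula g.
  exact: GRing.quantifier_elim_wf wf _ (GRing.to_rform_rformula f).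
apply: (Good_ext (X := fun x => GRing.qf_eval (set_nth 0 e j x) g)); last exact: Good_qf.
move=> x; rewrite -(GRing.to_rformP _ f).
by split => /(GRing.quantifier_elim_rformP wf ok _ (GRing.to_rform_rformula f)).
Qed.


Lemma roots_list (q : {poly K}) : q != 0 -> exists r : seq K, forall x, root q x -> x \in r.
Proof.
move=> q0; case: (closed_field_poly_normal q) => r hr; exists r => x.
by rewrite {1}hr rootZ ?lead_coef_eq0 // root_prod_XsubC.
Qed.

Lemma Good_chain (X : nat -> K -> Prop) :
  (forall f : nat -> K, exists x : K, forall j, f j != x) ->
  (forall k x, X k.+1 x -> X k x) ->
  (forall k, exists x, X k x) ->
  (forall k, Good (X k)) ->
  exists x, forall k, X k x.
Proof.
move=> unc dec ne gd.
have mono k k' x : (k <= k')%N -> X k' x -> X k x.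
  move=> /subnKC <-; elim: (k' - k)%N => [|d IH]; first by rewrite addn0.
  by rewrite addnS => /dec /IH.
case: (classic (exists k0 q, q != 0 /\ forall x, X k0 x -> root q x)).
  move=> [k0 [q [q0 hq]]]; have [r hr] := roots_list q0.
  apply: NNPP => hno.
  have hy : forall y, exists k, ~ X k y.
    by move=> y; apply: NNPP => h; apply: hno; exists y => k; apply: NNPP => h'; apply: h; exists k.
  have [K0 [hK0 hK]] : exists K0, (k0 <= K0)%N /\ forall y, y \in r -> ~ X K0 y.
    elim: r {hr} => [|y r [K1 [h1 h2]]]; first by exists k0.
    have [ky hky] := hy y.
    exists (maxn K1 ky); split; first by apply: leq_trans h1 (leq_maxl _ _).
    move=> z; rewrite in_cons => /orP [/eqP ->|zr].
      by move=> /(mono _ _ _ (leq_maxr _ _)).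
    by move=> /(mono _ _ _ (leq_maxl _ _)); apply: h2.
  have [x hx] := ne K0.
  by apply: (hK x) => //; apply/hr/hq; apply: mono hx.
move=> nosmall.
have cof : forall k, exists q : {poly K}, q != 0 /\ forall x, ~~ root q x -> X k x.
  move=> k; case: (gd k) => // hs; case: nosmall.
  by case: hs => q hq; exists k, q.
pose qf k := proj1_sig (constructive_indefinite_description _ (cof k)).
have hqf k : qf k != 0 /\ forall x, ~~ root (qf k) x -> X k x.
  by rewrite /qf; case: constructive_indefinite_description.
have rl k : exists r : seq K, forall x, root (qf k) x -> x \in r.
  by apply: roots_list; case: (hqf k).
pose rf k := proj1_sig (constructive_indefinite_description _ (rl k)).
have hrf k x : root (qf k) x -> x \in rf k.
  by rewrite /rf; case: constructive_indefinite_description => r /= /(_ x).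
pose f (n : nat) : K := if @unpickle (prod nat nat) n is Some p then nth 0 (rf p.1) p.2 else 0.
have [x hx] := unc f.
exists x => k; apply: (proj2 (hqf k)); apply/negP => /hrf xin.
have := hx (pickle (k, index x (rf k))).
by rewrite /f pickleK /= nth_index // eqxx.
Qed.

End Good.

Section Regroup.
Variables (K : fieldType) (m n : nat).

Lemma keval_dep (F : kpoly K m n) (a b : 'I_n -> mi m -> K) :
  (forall t v, t \in F -> v \in t.2 -> a v.1 v.2 = b v.1 v.2) ->
  keval F a = keval F b.
Proof.
move=> h; rewrite /keval; apply: eq_big_seq => t tF; congr (_ * _).
by apply: eq_big_seq => v vt; exact: (h t v tF vt).
Qed.

Lemma keval_sub (N : nat) (F : kpoly K m n) (a b : 'I_n -> mi m -> K) :
  in_subring N F -> (forall i J, (mnorm J <= N)%N -> a i J = b i J) ->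
  keval F a = keval F b.
Proof.
move=> hF hab; apply/eqP; rewrite -subr_eq0; apply/eqP.
pose g (mu : seq (var m n)) := \prod_(v <- mu) a v.1 v.2 - \prod_(v <- mu) b v.1 v.2.
have gperm mu mu' : perm_eq mu mu' -> g mu = g mu'.
  by move=> hp; rewrite /g (perm_big _ hp) (perm_big _ hp).
have g0 mu : all (fun v : var m n => (mnorm v.2 <= N)%N) mu -> g mu = 0.
  move=> /allP h; apply/eqP; rewrite /g subr_eq0; apply/eqP; apply: eq_big_seq => v vmu.
  by apply: hab; apply: h.
have -> : keval F a - keval F b = \sum_(t <- F) t.1 * g t.2.
  by rewrite /keval -sumrB; apply: eq_bigr => t _; rewrite mulrBr.
move: {2}(size F) (leqnn (size F)) => sz; elim: sz F hF => [|sz IH] F hF.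
  by rewrite leqn0 => /nilP ->; rewrite big_nil.
case: F hF => [|t0 F'] hF hsz; first by rewrite big_nil.
set F := t0 :: F' in hF hsz *.
rewrite (bigID (fun t => perm_eq t.2 t0.2)) /=.
have -> : \sum_(t <- F | perm_eq t.2 t0.2) t.1 * g t.2 = kcoef F t0.2 * g t0.2.
  rewrite /kcoef mulr_suml; apply: eq_bigr => t ht; congr (_ * _).
  exact: gperm.
have -> : kcoef F t0.2 * g t0.2 = 0.
  case: (eqVneq (kcoef F t0.2) 0) => [->|hk]; first by rewrite mul0r.
  by rewrite g0 ?mulr0 //; apply: hF.
rewrite add0r -big_filter; apply: IH.
  move=> mu; rewrite /kcoef big_filter_cond.
  case hmu: (perm_eq mu t0.2).
    rewrite big1 ?eqxx // => t /andP [ht1 ht2].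
    by move: ht1; rewrite (perm_trans ht2 hmu).
  rewrite (eq_bigl (fun t => perm_eq t.2 mu)); first by apply: hF.
  move=> t /=; case ht: (perm_eq t.2 mu) => /=; last by rewrite andbF.
  rewrite andbT; apply/negP => ht0.
  by rewrite perm_sym in ht; move: hmu; rewrite (perm_trans ht ht0).
rewrite size_filter; move: hsz; rewrite /F /= perm_refl /=.
by move=> hsz; apply: leq_trans (count_size _ _) _.
Qed.

End Regroup.

Section Main.
Variables (K : closedFieldType) (m n s : nat) (Ps : 'I_s -> dpoly K m n)
  (S : 'I_n -> mi m -> Prop).

Definition Cond k (a : 'I_n -> mi m -> K) :=
  (forall l I, (mnorm I <= k)%N -> keval (Fpoly Ps l I) a = 0) /\
  (forall i J, (mnorm J <= k)%N -> (a i J = 0 <-> ~ S i J)).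

Lemma Cond_mono k k' a : (k <= k')%N -> Cond k' a -> Cond k a.
Proof.
move=> hk [h1 h2]; split=> [l I hI|i J hJ]; [apply: h1|apply: h2];
  exact: leq_trans hk.
Qed.

Definition bx k : seq (mi m) := [seq tomi L | L <- enum {ffun 'I_m -> 'I_k.+1}].

Lemma mem_bx k I : (mnorm I <= k)%N -> I \in bx k.
Proof.
move=> hI; apply/mapP; exists [ffun j => inord (I j)]; first by rewrite mem_enum.
apply/ffunP => j; rewrite !ffunE inordV // ltnS.
exact: leq_trans (le_mnorm I j) hI.
Qed.

Lemma bx_norm k I : I \in bx k -> (mnorm I <= k)%N.
Proof.
case/mapP => L _ ->; apply: mnorm_le => j; rewrite ffunE -ltnS; exact: ltn_ord.
Qed.

Definition varsF k : seq (var m n) :=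
  flatten [seq flatten [seq t.2 | t <- Fpoly Ps l I0] | l <- enum 'I_s, I0 <- bx k]
  ++ [seq (i, J) | i <- enum 'I_n, J <- bx k].

Definition Mk k := (\max_(v <- varsF k) (pickle v).+1)%N.

Lemma Mk_gt k v : v \in varsF k -> (pickle v < Mk k)%N.
Proof. by move=> hv; rewrite /Mk; apply: (@leq_bigmax_seq _ _ xpredT). Qed.

Lemma vars_F k l I t v : (mnorm I <= k)%N -> t \in Fpoly Ps l I -> v \in t.2 ->
  v \in varsF k.
Proof.
move=> hI ht hv; rewrite mem_cat; apply/orP; left.
apply/flattenP; exists (flatten [seq t.2 | t <- Fpoly Ps l I]).
  by apply: (allpairs_f (fun l I => flatten [seq t.2 | t <- Fpoly Ps l I]));
   rewrite ?mem_enum ?mem_bx.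
by apply/flattenP; exists t.2 => //; apply: map_f.
Qed.

Lemma vars_S k i J : (mnorm J <= k)%N -> (i, J) \in varsF k.
Proof.
move=> hJ; rewrite mem_cat; apply/orP; right.
by apply: (allpairs_f (fun i J => (i, J))); rewrite ?mem_enum ?mem_bx.
Qed.

Lemma Cond_dep k (a b : 'I_n -> mi m -> K) :
  (forall v, v \in varsF k -> a v.1 v.2 = b v.1 v.2) -> Cond k a -> Cond k b.
Proof.
move=> hab [h1 h2]; split=> [l I hI|i J hJ].
  rewrite -(h1 l I hI); apply: keval_dep => t v ht hv.
  by rewrite hab //; apply: vars_F ht hv.
by rewrite -(hab (i, J)) ?vars_S //; apply: h2.
Qed.


Definition tmon (mon : seq (var m n)) : GRing.term K :=
  foldr (fun v t => GRing.Mul (GRing.Var K (pickle v)) t) (GRing.Const 1) mon.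

Definition tkp (F : kpoly K m n) : GRing.term K :=
  foldr (fun t acc => GRing.Add (GRing.Mul (GRing.Const t.1) (tmon t.2)) acc)
    (GRing.Const 0) F.

Definition envf (e : seq K) : 'I_n -> mi m -> K := fun i J => nth 0 e (pickle (i, J)).

Lemma eval_tmon e mon : GRing.eval e (tmon mon) = \prod_(v <- mon) envf e v.1 v.2.
Proof.
elim: mon => [|v mon IH] /=; first by rewrite big_nil.
by rewrite big_cons IH /envf -surjective_pairing.
Qed.

Lemma eval_tkp e F : GRing.eval e (tkp F) = keval F (envf e).
Proof.
rewrite /keval; elim: F => [|t F IH] /=; first by rewrite big_nil.
by rewrite big_cons IH eval_tmon.
Qed.

Definition sb i J : bool := if excluded_middle_informative (S i J) then true else false.

Lemma sbP i J : sb i J <-> S i J.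
Proof. by rewrite /sb; case: excluded_middle_informative. Qed.

Definition bigAnd (fs : seq (GRing.formula K)) := foldr (@GRing.And K) (GRing.Bool true) fs.

Lemma holds_bigAnd (T : eqType) e (F : T -> GRing.formula K) (l : seq T) :
  GRing.holds e (bigAnd (map F l)) <-> forall x, x \in l -> GRing.holds e (F x).
Proof.
elim: l => [|y l IH] /=; first by split.
rewrite IH; split.
  by move=> [hf hfs] g; rewrite in_cons => /orP [/eqP ->|]; last apply: hfs.
by move=> h; split; [apply: h; rewrite mem_head | move=> g hg; apply: h; rewrite in_cons hg orbT].
Qed.

Definition sform i J : GRing.formula K :=
  if sb i J then GRing.Not (GRing.Equal (GRing.Var K (pickle (i, J))) (GRing.Const 0))
  else GRing.Equal (GRing.Var K (pickle (i, J))) (GRing.Const 0).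

Definition Phi k : GRing.formula K :=
  GRing.And
   (bigAnd (map (fun p => GRing.Equal (tkp (Fpoly Ps p.1 p.2)) (GRing.Const 0))
     [seq (l, I0) | l <- enum 'I_s, I0 <- bx k]))
   (bigAnd (map (fun p => sform p.1 p.2) [seq (i, J) | i <- enum 'I_n, J <- bx k])).

Lemma holds_Phi e k : GRing.holds e (Phi k) <-> Cond k (envf e).
Proof.
rewrite /Phi /= !holds_bigAnd; split.
  move=> [hE hS]; split=> [l I hI|i J hJ].
    rewrite -eval_tkp; apply: (hE (l, I)).
    by apply: (allpairs_f pair); rewrite ?mem_enum ?mem_bx.
  have := hS (i, J); rewrite /sform /envf /=.
  have hin : (i, J) \in [seq (i, J) | i <- enum 'I_n, J <- bx k].
    by apply: (allpairs_f pair); rewrite ?mem_enum ?mem_bx.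
  move=> /(_ hin).
  case: (boolP (sb i J)) => hb /= h; split.
  - by move=> h0; rewrite -sbP.
  - by move=> hS'; case: hS'; apply/sbP.
  - by move=> _ /sbP hs; rewrite hs in hb.
  - by move=> _.
move=> [h1 h2]; split.
  case => [l I] /allpairsP [[l' I'] /= [_ hI [-> ->]]] /=.
  by rewrite eval_tkp; apply: h1; apply: bx_norm.
case => [i J] /allpairsP [[i' J'] /= [_ hJ [-> ->]]]; rewrite /sform /=.
have := h2 i' J' (bx_norm hJ); rewrite /envf.
case: (boolP (sb i' J')) => hb /= h.
  by move=> h0; move/h: h0; rewrite -sbP.
by apply/h; rewrite -sbP; apply/negP.
Qed.

Definition Inv j (p : seq K) := size p = j /\ forall k, exists a : 'I_n -> mi m -> K,
  (forall v : var m n, (pickle v < j)%N -> a v.1 v.2 = nth 0 p (pickle v)) /\ Cond k a.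

Lemma set_nth_rcons (p : seq K) x : set_nth 0 p (size p) x = rcons p x.
Proof. by elim: p => [|y p IH] //=; rewrite IH. Qed.

Hypothesis unc : forall f : nat -> K, exists x : K, forall j, f j != x.

Lemma step_Inv j p : Inv j p -> exists x, Inv j.+1 (rcons p x).
Proof.
move=> [hs hI].
pose X k x := exists a : 'I_n -> mi m -> K,
  (forall v : var m n, (pickle v < j.+1)%N -> a v.1 v.2 = nth 0 (rcons p x) (pickle v))
  /\ Cond k a.
have [x hx] : exists x, forall k, X k x.
  apply: Good_chain => //.
  - move=> k x [a [ha hc]]; exists a; split => //; exact: Cond_mono (leqnSn k) hc.
  - move=> k; have [a [ha hc]] := hI k.
    exists (if @unpickle (var m n) j is Some v then a v.1 v.2 else 0), a; split => // v.
    rewrite ltnS leq_eqVlt => /orP [/eqP e|lt]; rewrite nth_rcons hs.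
      by rewrite e ltnn eqxx -e pickleK.
    by rewrite lt ha.
  - move=> k.
    apply: (Good_ext (X := fun x => GRing.holds (set_nth 0 p j x)
               (foldr (@GRing.Exists K) (Phi k) (iota j.+1 (Mk k))))); last exact: Good_holds.
    move=> x; rewrite -hs set_nth_rcons hs; split.
      move/GRing.foldExistsP => [e' he' hh]; exists (envf e'); split; last exact/holds_Phi.
      move=> v hv; rewrite /envf -surjective_pairing; symmetry; apply: he'.
      by rewrite inE mem_iota negb_and -ltnNge hv.
    move=> [a [ha hc]]; apply/GRing.foldExistsP.
    exists (mkseq (fun idx => if (idx < j.+1)%N then nth 0 (rcons p x) idx
             else if @unpickle (var m n) idx is Some v then a v.1 v.2 else 0) (j.+1 + Mk k)).
      move=> idx; rewrite inE mem_iota negb_and -ltnNge -leqNgt => /orP [lt|ge].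
        by rewrite nth_mkseq ?lt // ltn_addr.
      rewrite !nth_default // ?size_mkseq ?size_rcons ?hs //.
      by apply: leq_trans ge; apply: leq_addr.
    apply/holds_Phi; apply: (Cond_dep _ hc) => v hv.
    rewrite /envf -surjective_pairing nth_mkseq; last by apply: ltn_addl; apply: Mk_gt.
    by case: ifP => hlt; [rewrite ha | rewrite pickleK].
by exists x; split; [rewrite size_rcons hs | exact: hx].
Qed.

Lemma all_Cond : (forall k, exists a, Cond k a) -> exists a, forall k, Cond k a.
Proof.
move=> base.
have Inv0 : Inv 0 [::].
  by split => // k; have [a ha] := base k; exists a; split.
pose step (p : seq K) := epsilon (inhabits (0 : K)) (fun x => Inv (size p).+1 (rcons p x)).
pose seqp := fix seqp j := if j is j'.+1 then rcons (seqp j') (step (seqp j')) else [::].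
have hInv : forall j, Inv j (seqp j).
  elim => [|j IH] //=.
  have [x hx] := step_Inv IH.
  have hs : size (seqp j) = j by case: IH.
  have H : Inv (size (seqp j)).+1 (rcons (seqp j) (step (seqp j))).
    have ex : exists y, Inv (size (seqp j)).+1 (rcons (seqp j) y) by exists x; rewrite hs.
    exact: (epsilon_spec (inhabits (0:K)) _ ex).
  by rewrite hs in H.
have hsz j : size (seqp j) = j by case: (hInv j).
have pref j d idx : (idx < j)%N -> nth 0 (seqp (j + d)%N) idx = nth 0 (seqp j) idx.
  move=> hidx; elim: d => [|d IH]; first by rewrite addn0.
  rewrite addnS /= nth_rcons hsz.
  by have -> : (idx < j + d)%N by apply: leq_trans hidx (leq_addr _ _).
pose afin (i : 'I_n) (J : mi m) := nth 0 (seqp (pickle (i, J)).+1) (pickle (i, J)).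
exists afin => k.
have [_ hk] := hInv (Mk k); have [a [ha hc]] := hk k.
apply: (Cond_dep _ hc) => v hv.
rewrite ha ?Mk_gt // /afin -surjective_pairing.
have hlt := Mk_gt hv.
rewrite -(subnKC hlt) pref //.
Qed.

Lemma base_Cond (HA : forall k N, isNk Ps k N -> exists a : tupl K m n N, in_AS Ps k S a) :
  forall k, exists a, Cond k a.
Proof.
move=> k.
have hb : bounds_ok Ps k (\max_(v <- varsF k) mnorm v.2)%N.
  move=> l I hI mu hmu.
  have : has (fun t => perm_eq t.2 mu) (Fpoly Ps l I).
    apply: contraNT hmu => /hasPn h; rewrite /kcoef big1_seq // => t /andP [pt tin].
    by rewrite (negbTE (h t tin)) in pt.
  case/hasP => t tin pt; apply/allP => v vmu.
  have vt : v \in t.2 by rewrite (perm_mem pt).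
  exact: (@leq_bigmax_seq _ _ xpredT (fun v : var m n => mnorm v.2)) (vars_F hI tin vt) isT.
have [N [hN hmin]] : exists N, bounds_ok Ps k N /\ forall N', bounds_ok Ps k N' -> (N <= N')%N.
  move: hb; move: (\max_(v <- varsF k) mnorm v.2)%N => N0.
  elim/ltn_ind: N0 => N0 IH hN0.
  case: (classic (exists N', (N' < N0)%N /\ bounds_ok Ps k N')).
    by move=> [N' [lt hN']]; apply: (IH N' lt hN').
  move=> hno; exists N0; split => // N' hN'; rewrite leqNgt; apply/negP => lt.
  by apply: hno; exists N'.
have [a [hA hS]] := HA k N (conj hN hmin).
exists (fun i J => if (mnorm J <= N)%N then a i [ffun j => inord (J j)]
                   else if sb i J then 1 else 0); split.
  move=> l I hI; rewrite -(hA l I hI); apply: (keval_sub (hN l I hI)) => i J hJ.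
  by rewrite /ext_tupl hJ.
move=> i J hJ; case: ifP => hJN.
  have eqJ : lowJ [ffun j => (inord (J j) : 'I_N.+1)] = J.
    apply/ffunP => j; rewrite !ffunE inordV // ltnS.
    exact: leq_trans (le_mnorm J j) hJN.
  by have := hS i [ffun j => (inord (J j) : 'I_N.+1)]; rewrite eqJ.
case: (boolP (sb i J)) => hb'.
  by split => //; [move/eqP; rewrite oner_eq0 | move=> h; case: h; apply/sbP].
split=> // _ /sbP hs; by rewrite hs in hb'.
Qed.

Lemma final_phi (char0 : [pchar K] =i pred0)
  (HA : forall k N, isNk Ps k N -> exists a : tupl K m n N, in_AS Ps k S a) :
  exists phi : 'I_n -> pser K m,
    (forall l : 'I_s, dpeval (Ps l) phi = @pzero K m) /\
    (forall (i : 'I_n) (J : mi m), Supp (phi i) J <-> S i J).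
Proof.
have [a ha] := all_Cond (base_Cond HA).
pose phi (i : 'I_n) : pser K m := fun J => a i J / @fct K m J.
have hTh : (fun i J => Theta J (phi i) (mi0 m)) = a.
  apply: functional_extensionality => i; apply: functional_extensionality => J.
  by rewrite Theta_at0 /phi mulrC divfK // fct_neq0.
exists phi; split.
  move=> l; apply: functional_extensionality => I.
  have hI := (ha (mnorm I)).1 l I (leqnn _).
  have : @fct K m I * dpeval (Ps l) phi I = 0.
    by rewrite -Theta_at0 dpTheta_eval dpeval_at0 hTh.
  by move/eqP; rewrite mulf_eq0 (negbTE (fct_neq0 _ char0)) /= => /eqP.
move=> i J; have [_ hs] := ha (mnorm J); have := hs i J (leqnn _).
rewrite /Supp /phi mulf_eq0 invr_eq0 (negbTE (fct_neq0 _ char0)) orbF => h.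
split; first by move=> /eqP h1; apply: NNPP => h2; apply: h1; apply/h.
by move=> hS; apply/eqP => h0; move/h: h0; apply.
Qed.

End Main.

Theorem mainTheorem12
  (K : closedFieldType)
  (char0 : [pchar K] =i pred0)
  (uncountable : forall f : nat -> K, exists x : K, forall j, f j != x)
  (m n : nat) (hm : (1 <= m)%N) (hn : (1 <= n)%N)
  (s : nat) (Ps : 'I_s -> dpoly K m n)
  (S : 'I_n -> mi m -> Prop) :
  ~ (exists phi : 'I_n -> pser K m,
        (forall l : 'I_s, dpeval (Ps l) phi = @pzero K m) /\
        (forall (i : 'I_n) (J : mi m), Supp (phi i) J <-> S i J)) ->
  exists k N : nat, isNk Ps k N /\ forall a : tupl K m n N, ~ in_AS Ps k S a.
Proof.
move=> Hno; apply: NNPP => Hneg; apply: Hno.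
apply: (final_phi uncountable char0) => k N hN; apply: NNPP => hna.
apply: Hneg; exists k, N; split => // a ha; apply: hna; by exists a.
Qed.
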